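(* Let $X$ be a proper geodesic metric space, $x_0\in X$ a basepoint, and $g:X\to X$ a Morse isometry. Then there exists a Morse bi-infinite geodesic $\gamma$ such that $\gamma(\infty)$ and $\gamma(-\infty)$ are two distinct points of $\partial_M X$ fixed by $g$.
   Context: A Morse gauge is a function $N:[1,\infty)\times[0,\infty)\to[0,\infty)$; a (quasi-)geodesic $\gamma$ is $N$-Morse if every $(\lambda,\epsilon)$-quasi-geodesic with endpoints on $\gamma$ lies in the $N(\lambda,\epsilon)$-neighborhood of $\gamma$; Morse means $N$-Morse for some $N$. $\partial_M X$ is the set of Morse geodesic rays modulo finite Hausdorff distance, isometries acting by $[\alpha]\mapsto[g\circ\alpha]$; for a bi-infinite geodesic $\gamma$, $\gamma(\pm\infty)$ denote the classes of its two ends. With $x_n=g^n(x_0)$, an isometry $g$ is Morse if there are a Morse gauge $N$ and geodesics $[x_i,x_{i+1}]$ ($i\in\mathbb{Z}$) whose bi-infinite concatenation is an $N$-Morse quasi-geodesic. *)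

(* Defs.v *)
From Stdlib Require Import Reals ZArith List.
Open Scope R_scope.

Set Implicit Arguments.
Section MetricDefs.
Variables (X : Type) (d : X -> X -> R).

Definition is_metric : Prop :=
  (forall x y, 0 <= d x y) /\ (forall x y, d x y = 0 <-> x = y) /\
  (forall x y, d x y = d y x) /\ (forall x y z, d x z <= d x y + d y z).

Definition open_set (U : X -> Prop) : Prop :=
  forall x, U x -> exists e, 0 < e /\ forall y, d x y < e -> U y.

Definition compact_set (K : X -> Prop) : Prop :=
  forall (I : Type) (U : I -> X -> Prop),
    (forall i, open_set (U i)) -> (forall x, K x -> exists i, U i x) ->
    exists l : list I, forall x, K x -> exists i, In i l /\ U i x.

Definition proper_space : Prop :=
  forall x r, compact_set (fun y => d x y <= r).

Definition geodesic_on (D : R -> Prop) (c : R -> X) : Prop :=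
  forall s t, D s -> D t -> d (c s) (c t) = Rabs (s - t).

Definition geodesic_space : Prop :=
  forall x y, exists c : R -> X,
    geodesic_on (fun t => 0 <= t <= d x y) c /\ c 0 = x /\ c (d x y) = y.

(** (lam, eps)-quasi-geodesic on the domain D (no continuity required) *)
Definition quasi_geodesic_on (lam eps : R) (D : R -> Prop) (c : R -> X) : Prop :=
  forall s t, D s -> D t ->
    (1 / lam) * Rabs (s - t) - eps <= d (c s) (c t) /\
    d (c s) (c t) <= lam * Rabs (s - t) + eps.

Definition is_quasi_geodesic (D : R -> Prop) (c : R -> X) : Prop :=
  exists lam eps, 1 <= lam /\ 0 <= eps /\ quasi_geodesic_on lam eps D c.

Definition morse_gauge (N : R -> R -> R) : Prop :=
  forall lam eps, 1 <= lam -> 0 <= eps -> 0 <= N lam eps.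

Definition N_morse (N : R -> R -> R) (D : R -> Prop) (gamma : R -> X) : Prop :=
  forall lam eps a b (c : R -> X), 1 <= lam -> 0 <= eps -> a <= b ->
    quasi_geodesic_on lam eps (fun t => a <= t <= b) c ->
    (exists s, D s /\ c a = gamma s) -> (exists s, D s /\ c b = gamma s) ->
    forall t, a <= t <= b -> exists s, D s /\ d (c t) (gamma s) <= N lam eps.

Definition is_morse (D : R -> Prop) (gamma : R -> X) : Prop :=
  exists N, morse_gauge N /\ N_morse N D gamma.

Definition ray_dom (t : R) : Prop := 0 <= t.
Definition line_dom (t : R) : Prop := True.

(** Morse geodesic ray [0,oo) -> X (a representative of a point of the
    Morse boundary) *)
Definition morse_geodesic_ray (c : R -> X) : Prop :=
  geodesic_on ray_dom c /\ is_morse ray_dom c.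

Definition finite_hausdorff (D1 : R -> Prop) (c1 : R -> X)
    (D2 : R -> Prop) (c2 : R -> X) : Prop :=
  exists K, (forall s, D1 s -> exists t, D2 t /\ d (c1 s) (c2 t) <= K) /\
            (forall t, D2 t -> exists s, D1 s /\ d (c1 s) (c2 t) <= K).

(** equality of points of the Morse boundary, represented by rays *)
Definition same_boundary_point (a b : R -> X) : Prop :=
  finite_hausdorff ray_dom a ray_dom b.

(** the two ends of a bi-infinite path, as rays *)
Definition pos_end (gamma : R -> X) : R -> X := fun t => gamma t.
Definition neg_end (gamma : R -> X) : R -> X := fun t => gamma (- t).

Definition isometry (g : X -> X) : Prop :=
  (forall x y, d (g x) (g y) = d x y) /\ (forall y, exists x, g x = y).

(** Morse isometry: with x_n = g^n(x0) (n in Z), there are geodesics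
    [x_i, x_{i+1}] whose bi-infinite concatenation (parametrized by arc
    length, the i-th segment on [i L, (i+1) L], L = d(x0, g x0)) is an
    N-Morse quasi-geodesic. *)
Definition morse_isometry (g : X -> X) (x0 : X) : Prop :=
  isometry g /\
  exists (x : Z -> X), x 0%Z = x0 /\ (forall n, x (n + 1)%Z = g (x n)) /\
  let L := d x0 (g x0) in 0 < L /\
  exists N, morse_gauge N /\ exists c : R -> X,
    (forall i : Z,
        geodesic_on (fun t => 0 <= t <= L) (fun t => c (IZR i * L + t)) /\
        c (IZR i * L) = x i /\ c (IZR i * L + L) = x (i + 1)%Z) /\
    is_quasi_geodesic line_dom c /\ N_morse N line_dom c.

End MetricDefs.

(* Main.v *)
Require Import Defs.
From Stdlib Require Import Reals ZArith List Lra Lia ClassicalEpsilon Classical.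
Open Scope R_scope.

Ltac rabs_all := repeat match goal with
 | H : context [Rabs ?x] |- _ => let h := fresh in destruct (Rcase_abs x) as [h|h];
     [rewrite (Rabs_left x h) in * | rewrite (Rabs_right x h) in *]
 | |- context [Rabs ?x] => let h := fresh in destruct (Rcase_abs x) as [h|h];
     [rewrite (Rabs_left x h) in * | rewrite (Rabs_right x h) in *]
 end.

Lemma crossing (P Q : R -> Prop) a t : a <= t -> P a -> Q t ->
  (forall s, a <= s <= t -> P s \/ Q s) ->
  exists s1 s2, a <= s1 <= t /\ a <= s2 <= t /\ Rabs (s1 - s2) <= 1 /\ P s1 /\ Q s2.
Proof.
  intros Hat HPa HQt Htot.
  destruct (INR_archimed 1 (t - a)) as [K HK]; [lra|].
  set (pt := fun i : nat => Rmin (a + INR i) t).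
  assert (Hpt : forall i, a <= pt i <= t).
  { intro i; unfold pt, Rmin; pose proof (pos_INR i); destruct Rle_dec; lra. }
  assert (Hst : forall i, Rabs (pt i - pt (S i)) <= 1).
  { intro i; unfold pt, Rmin; rewrite S_INR; pose proof (pos_INR i);
    destruct Rle_dec; destruct Rle_dec; rabs_all; lra. }
  assert (gen : forall k, Q (pt k) -> exists s1 s2, a <= s1 <= t /\ a <= s2 <= t /\
     Rabs (s1 - s2) <= 1 /\ P s1 /\ Q s2).
  { induction k as [|k IH]; intro HQ.
    - assert (E : pt 0%nat = a) by (unfold pt, Rmin; simpl; destruct Rle_dec; lra).
      rewrite E in HQ. exists a, a. repeat split; try lra.
      rewrite Rminus_diag, Rabs_R0; lra. all: assumption.
    - destruct (classic (Q (pt k))) as [Hq|Hq]; [now apply IH|].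
      destruct (Htot (pt k) (Hpt k)) as [Hp|Hp]; [|contradiction].
      exists (pt k), (pt (S k)); repeat split; try apply Hpt; auto. }
  apply (gen K). replace (pt K) with t; auto.
  unfold pt, Rmin; destruct Rle_dec; lra.
Qed.

Definition ez (k : nat) : Z :=
  if Nat.odd k then (- Z.of_nat (Nat.div2 k) - 1)%Z else Z.of_nat (Nat.div2 k).
Definition einv (j : Z) : nat :=
  if (0 <=? j)%Z then (2 * Z.to_nat j)%nat else (2 * Z.to_nat (- j - 1) + 1)%nat.

Lemma ez_einv j : ez (einv j) = j.
Proof.
  unfold einv, ez. destruct (Z.leb_spec 0 j).
  - rewrite Nat.odd_even, Nat.div2_double. lia.
  - rewrite Nat.odd_odd. rewrite Nat.add_1_r, Nat.div2_succ_double. lia.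
Qed.

Lemma einv_bound j : (einv j <= 2 * Z.to_nat (Z.abs j))%nat.
Proof. unfold einv; destruct (Z.leb_spec 0 j); lia. Qed.


Definition fl (t : R) : Z := (up t - 1)%Z.
Lemma fl_spec t : IZR (fl t) <= t < IZR (fl t) + 1.
Proof. unfold fl; rewrite minus_IZR; pose proof (archimed t); simpl; lra. Qed.

Lemma fl_int j : fl (IZR j) = j.
Proof.
  unfold fl. rewrite <- (tech_up (IZR j) (j + 1)); [lia| |]; rewrite plus_IZR; lra.
Qed.


Definition clamp (D z : R) := Rmax 0 (Rmin z D).
Lemma clamp_in D z : 0 <= D -> 0 <= clamp D z <= D.
Proof. intros; unfold clamp, Rmax, Rmin; repeat destruct Rle_dec; lra. Qed.
Lemma clamp_id D z : 0 <= z <= D -> clamp D z = z.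
Proof. intros; unfold clamp, Rmax, Rmin; repeat destruct Rle_dec; lra. Qed.
Lemma clamp_lip D z w : 0 <= w <= D -> Rabs (clamp D z - w) <= Rabs (z - w).
Proof. intros; unfold clamp, Rmax, Rmin; repeat destruct Rle_dec; rabs_all; lra. Qed.

Lemma inv_le1 (m : nat) : / INR (S m) <= 1.
Proof.
  rewrite <- Rinv_1. apply Rinv_le_contravar; [lra|].
  rewrite S_INR; pose proof (pos_INR m); lra.
Qed.

Lemma inv_mono (m n : nat) : (m <= n)%nat -> / INR (S n) <= / INR (S m).
Proof.
  intros; apply Rinv_le_contravar; [apply lt_0_INR; lia|]. apply le_INR; lia.
Qed.

Lemma small_eq a b (M : nat) : (forall m, (M <= m)%nat -> Rabs (a - b) <= 2 * / INR (S m)) -> a = b.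
Proof.
  intros H. destruct (Req_dec_T a b) as [E|E]; auto. exfalso.
  assert (Hp : 0 < Rabs (a - b)) by (apply Rabs_pos_lt; lra).
  destruct (INR_archimed (Rabs (a - b)) 2 Hp) as [n Hn].
  specialize (H (Nat.max M n) ltac:(lia)).
  assert (Hpos : 0 < INR (S (Nat.max M n))) by (apply lt_0_INR; lia).
  apply (Rmult_le_compat_r (INR (S (Nat.max M n)))) in H; [|lra].
  replace (2 * / INR (S (Nat.max M n)) * INR (S (Nat.max M n))) with 2 in H by (field; lra).
  assert (INR n <= INR (S (Nat.max M n))) by (apply le_INR; lia).
  assert (INR n * Rabs (a - b) <= INR (S (Nat.max M n)) * Rabs (a - b))
    by (apply Rmult_le_compat_r; lra).
  lra.
Qed.

Section Gen.
Variables (X : Type) (d : X -> X -> R).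
Hypothesis Hm : is_metric d.

Lemma d_nn x y : 0 <= d x y. Proof. destruct Hm as [H _]; apply H. Qed.
Lemma d_refl x : d x x = 0. Proof. destruct Hm as [_ [H _]]; apply H; reflexivity. Qed.
Lemma d_sym x y : d x y = d y x. Proof. destruct Hm as [_ [_ [H _]]]; apply H. Qed.
Lemma d_tri x y z : d x z <= d x y + d y z. Proof. destruct Hm as [_ [_ [_ H]]]; apply H. Qed.

Lemma qg_upper lam eps D q s t : quasi_geodesic_on d lam eps D q -> D s -> D t ->
  d (q s) (q t) <= lam * Rabs (s - t) + eps.
Proof. intros H Hs Ht; apply (H s t Hs Ht). Qed.

Lemma qg_lower lam eps D q s t : 1 <= lam -> quasi_geodesic_on d lam eps D q -> D s -> D t ->
  Rabs (s - t) <= lam * (d (q s) (q t) + eps).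
Proof.
  intros Hl H Hs Ht; destruct (H s t Hs Ht) as [H1 _].
  assert (A : 1 / lam * Rabs (s - t) <= d (q s) (q t) + eps) by lra.
  apply (Rmult_le_compat_l lam) in A; [|lra].
  replace (lam * (1 / lam * Rabs (s - t))) with (Rabs (s - t)) in A by (field; lra).
  exact A.
Qed.

Lemma geo_qg D c : geodesic_on d D c -> quasi_geodesic_on d 1 0 D c.
Proof. intros H s t Hs Ht; rewrite (H s t Hs Ht); split; lra. Qed.

Lemma qg_perturb lam eps D q q' K : quasi_geodesic_on d lam eps D q ->
  (forall t, D t -> d (q t) (q' t) <= K) -> quasi_geodesic_on d lam (eps + 2 * K) D q'.
Proof.
  intros H HK s t Hs Ht; destruct (H s t Hs Ht) as [H1 H2].
  pose proof (HK s Hs); pose proof (HK t Ht).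
  pose proof (d_tri (q' s) (q s) (q' t)); pose proof (d_tri (q s) (q t) (q' t)).
  pose proof (d_tri (q s) (q' s) (q t)); pose proof (d_tri (q' s) (q' t) (q t)).
  rewrite (d_sym (q' s) (q s)) in *. rewrite (d_sym (q' t) (q t)) in *.
  split; lra.
Qed.


Definition Bf (lam0 eps0 M W : R) := M + lam0 * (lam0 * (2 * M + W + eps0)) + eps0.
Definition Ex (lam0 eps0 M lam eps : R) :=
  let B := Bf lam0 eps0 M (lam + eps) in lam * (lam * (2 * B + eps)) + eps + B.

Lemma Bf_ge lam0 eps0 M W : 1 <= lam0 -> 0 <= eps0 -> 0 <= M -> 0 <= W -> M <= Bf lam0 eps0 M W.
Proof.
  intros; unfold Bf.
  assert (0 <= lam0 * (lam0 * (2 * M + W + eps0))) by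
    (apply Rmult_le_pos; [lra| apply Rmult_le_pos; lra]).
  lra.
Qed.

Lemma Ex_ge lam0 eps0 M lam eps : 1 <= lam0 -> 0 <= eps0 -> 0 <= M -> 1 <= lam -> 0 <= eps ->
  M <= Ex lam0 eps0 M lam eps.
Proof.
  intros; unfold Ex.
  pose proof (Bf_ge lam0 eps0 M (lam + eps)).
  assert (0 <= lam * (lam * (2 * Bf lam0 eps0 M (lam + eps) + eps))) by
    (apply Rmult_le_pos; [lra| apply Rmult_le_pos; lra]).
  lra.
Qed.

Lemma close_pair gam lam0 eps0 M W al z1 z2 s1 s2 : 1 <= lam0 ->
  quasi_geodesic_on d lam0 eps0 line_dom gam ->
  d z1 (gam s1) <= M -> d z2 (gam s2) <= M -> d z1 z2 <= W ->
  (s1 <= al <= s2 \/ s2 <= al <= s1) ->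
  d z1 (gam al) <= Bf lam0 eps0 M W.
Proof.
  intros Hl Hq H1 H2 H12 Hal.
  assert (A : d (gam s1) (gam s2) <= 2 * M + W).
  { pose proof (d_tri (gam s1) z1 (gam s2)); pose proof (d_tri z1 z2 (gam s2)).
    rewrite (d_sym (gam s1) z1) in *; lra. }
  pose proof (qg_lower _ _ _ _ s1 s2 Hl Hq I I) as B.
  assert (B2 : Rabs (s1 - s2) <= lam0 * (2 * M + W + eps0)).
  { eapply Rle_trans; [exact B|]. apply Rmult_le_compat_l; lra. }
  assert (C : Rabs (s1 - al) <= lam0 * (2 * M + W + eps0)).
  { eapply Rle_trans; [|exact B2]. rabs_all; lra. }
  pose proof (qg_upper _ _ _ _ s1 al Hq I I) as D.
  assert (D2 : d (gam s1) (gam al) <= lam0 * (lam0 * (2 * M + W + eps0)) + eps0).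
  { eapply Rle_trans; [exact D|]. apply Rplus_le_compat_r. apply Rmult_le_compat_l; lra. }
  pose proof (d_tri z1 (gam s1) (gam al)). unfold Bf; lra.
Qed.

Lemma gen_cross gam lam0 eps0 (q : R -> X) a b M W al sa sb : 1 <= lam0 ->
  quasi_geodesic_on d lam0 eps0 line_dom gam -> a <= b ->
  (forall u v, a <= u <= b -> a <= v <= b -> Rabs (u - v) <= 1 -> d (q u) (q v) <= W) ->
  (forall u, a <= u <= b -> exists s, d (q u) (gam s) <= M) ->
  d (q a) (gam sa) <= M -> d (q b) (gam sb) <= M ->
  (sa <= al <= sb \/ sb <= al <= sa) ->
  exists u, a <= u <= b /\ d (q u) (gam al) <= Bf lam0 eps0 M W.
Proof.
  intros Hl Hq Hab HW Hcov Ha Hb Hal.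
  set (P := fun u => exists s, s <= al /\ d (q u) (gam s) <= M).
  set (Q := fun u => exists s, al <= s /\ d (q u) (gam s) <= M).
  assert (Htot : forall u, a <= u <= b -> P u \/ Q u).
  { intros u Hu; destruct (Hcov u Hu) as [s Hs]; destruct (Rle_dec s al).
    - left; exists s; auto.
    - right; exists s; split; [lra|auto]. }
  destruct Hal as [Hal|Hal].
  - destruct (crossing P Q a b) as [u1 [u2 [Hu1 [Hu2 [H12 [[s1 [Hs1 Hd1]] [s2 [Hs2 Hd2]]]]]]]];
      auto.
    + exists sa; split; [lra|auto].
    + exists sb; split; [lra|auto].
    + exists u1; split; auto. eapply close_pair; eauto; lra.
  - destruct (crossing Q P a b) as [u1 [u2 [Hu1 [Hu2 [H12 [[s1 [Hs1 Hd1]] [s2 [Hs2 Hd2]]]]]]]];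
      auto.
    + exists sa; split; [lra|auto].
    + exists sb; split; [lra|auto].
    + intros u Hu; destruct (Htot u Hu); auto.
    + exists u1; split; auto. eapply close_pair; eauto; lra.
Qed.


Lemma seg_ray gam lam0 eps0 N lam eps a b q al s1 s2 t : 1 <= lam0 -> 0 <= eps0 ->
  quasi_geodesic_on d lam0 eps0 line_dom gam -> N_morse d N line_dom gam ->
  1 <= lam -> 0 <= eps -> a <= t <= b ->
  quasi_geodesic_on d lam eps (fun u => a <= u <= b) q ->
  q a = gam s1 -> q b = gam s2 -> al <= s1 -> al <= s2 ->
  exists s, al <= s /\ d (q t) (gam s) <= Ex lam0 eps0 (N lam eps) lam eps.
Proof.
  intros Hl0 He0 Hg HN Hl He Ht Hq Ea Eb H1 H2.
  assert (Hcov : forall u, a <= u <= b -> exists s, d (q u) (gam s) <= N lam eps).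
  { intros u Hu. destruct (HN lam eps a b q Hl He ltac:(lra) Hq
      (ex_intro _ s1 (conj I Ea)) (ex_intro _ s2 (conj I Eb)) u Hu) as [s [_ Hs]].
    exists s; exact Hs. }
  destruct (Hcov t Ht) as [s Hs].
  assert (HM : 0 <= N lam eps) by (pose proof (d_nn (q t) (gam s)); lra).
  destruct (Rle_dec al s) as [Has|Has].
  { exists s; split; auto. pose proof (Ex_ge lam0 eps0 (N lam eps) lam eps); lra. }
  assert (HW : forall u v, a <= u <= b -> a <= v <= b -> Rabs (u - v) <= 1 ->
     d (q u) (q v) <= lam + eps).
  { intros u v Hu Hv Huv. pose proof (qg_upper _ _ _ _ u v Hq Hu Hv).
    assert (lam * Rabs (u - v) <= lam * 1) by (apply Rmult_le_compat_l; lra). lra. }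
  destruct (gen_cross gam lam0 eps0 q a t (N lam eps) (lam + eps) al s1 s) as [w1 [Hw1 Dw1]];
    auto; try lra.
  { intros u v Hu Hv; apply HW; lra. }
  { intros u Hu; apply Hcov; lra. }
  { rewrite Ea, d_refl; auto. }
  destruct (gen_cross gam lam0 eps0 q t b (N lam eps) (lam + eps) al s s2) as [w2 [Hw2 Dw2]];
    auto; try lra.
  { intros u v Hu Hv; apply HW; lra. }
  { intros u Hu; apply Hcov; lra. }
  { rewrite Eb, d_refl; auto. }
  set (B := Bf lam0 eps0 (N lam eps) (lam + eps)) in *.
  assert (D12 : d (q w1) (q w2) <= 2 * B).
  { pose proof (d_tri (q w1) (gam al) (q w2)). rewrite (d_sym (gam al) (q w2)) in *. lra. }
  pose proof (qg_lower _ _ _ _ w1 w2 Hl Hq ltac:(lra) ltac:(lra)) as L1.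
  assert (L2 : Rabs (t - w1) <= lam * (2 * B + eps)).
  { eapply Rle_trans; [|eapply Rle_trans; [exact L1|]].
    - rabs_all; lra.
    - apply Rmult_le_compat_l; lra. }
  pose proof (qg_upper _ _ _ _ t w1 Hq ltac:(lra) ltac:(lra)) as U1.
  assert (U2 : d (q t) (q w1) <= lam * (lam * (2 * B + eps)) + eps).
  { eapply Rle_trans; [exact U1|]. apply Rplus_le_compat_r, Rmult_le_compat_l; lra. }
  exists al; split; [lra|].
  pose proof (d_tri (q t) (q w1) (gam al)). unfold Ex; fold B. lra.
Qed.

Lemma qg_rev lam eps gam : quasi_geodesic_on d lam eps line_dom gam ->
  quasi_geodesic_on d lam eps line_dom (fun s => gam (- s)).
Proof.
  intros H s t _ _. replace (Rabs (s - t)) with (Rabs (- s - - t)).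
  - apply H; exact I.
  - replace (- s - - t) with (- (s - t)) by ring. apply Rabs_Ropp.
Qed.

Lemma morse_rev N gam : N_morse d N line_dom gam -> N_morse d N line_dom (fun s => gam (- s)).
Proof.
  intros H lam eps a b c Hl He Hab Hc [s1 [_ E1]] [s2 [_ E2]] t Ht.
  destruct (H lam eps a b c Hl He Hab Hc (ex_intro _ (- s1) (conj I E1))
     (ex_intro _ (- s2) (conj I E2)) t Ht) as [s [_ Hs]].
  exists (- s); split; [exact I|]. rewrite Ropp_involutive; exact Hs.
Qed.

Lemma seg_ray_le gam lam0 eps0 N lam eps a b q be s1 s2 t : 1 <= lam0 -> 0 <= eps0 ->
  quasi_geodesic_on d lam0 eps0 line_dom gam -> N_morse d N line_dom gam ->
  1 <= lam -> 0 <= eps -> a <= t <= b ->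
  quasi_geodesic_on d lam eps (fun u => a <= u <= b) q ->
  q a = gam s1 -> q b = gam s2 -> s1 <= be -> s2 <= be ->
  exists s, s <= be /\ d (q t) (gam s) <= Ex lam0 eps0 (N lam eps) lam eps.
Proof.
  intros Hl0 He0 Hg HN Hl He Ht Hq Ea Eb H1 H2.
  destruct (seg_ray (fun s => gam (- s)) lam0 eps0 N lam eps a b q (- be) (- s1) (- s2) t)
    as [s [Hs Ds]]; auto using qg_rev, morse_rev; try lra.
  - rewrite Ropp_involutive; auto.
  - rewrite Ropp_involutive; auto.
  - exists (- s); split; [lra|auto].
Qed.

Lemma ray_morse gam N : geodesic_on d line_dom gam -> N_morse d N line_dom gam ->
  morse_gauge N -> is_morse d ray_dom gam.
Proof.
  intros Hg HN HG. exists (fun lam eps => Ex 1 0 (N lam eps) lam eps); split.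
  - intros lam eps Hl He. pose proof (HG lam eps Hl He).
    pose proof (Ex_ge 1 0 (N lam eps) lam eps); lra.
  - intros lam eps a b c Hl He Hab Hc [s1 [H1 E1]] [s2 [H2 E2]] t Ht.
    destruct (seg_ray gam 1 0 N lam eps a b c 0 s1 s2 t) as [s [Hs Ds]];
      auto using geo_qg; try lra.
    exists s; split; auto.
Qed.

Lemma morse_transfer gam c N K1 K2 : N_morse d N line_dom c -> morse_gauge N -> 0 <= K1 ->
  (forall t, exists s, d (gam t) (c s) <= K1) -> (forall s, exists t, d (gam t) (c s) <= K2) ->
  N_morse d (fun lam eps => N lam (eps + 2 * K1) + K2) line_dom gam.
Proof.
  intros HN HG HK1 H1 H2 lam eps a b q Hl He Hab Hq [s1 [_ E1]] [s2 [_ E2]] t Ht.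
  assert (HK2 : 0 <= K2) by (destruct (H2 0) as [t0 Ht0]; pose proof (d_nn (gam t0) (c 0)); lra).
  pose proof (HG lam (eps + 2 * K1) Hl ltac:(lra)) as HNn.
  destruct (Req_dec_T t a) as [Eta|Nta].
  { exists s1; split; [exact I|]. subst t; rewrite E1, d_refl; lra. }
  destruct (Req_dec_T t b) as [Etb|Ntb].
  { exists s2; split; [exact I|]. subst t; rewrite E2, d_refl; lra. }
  assert (Nab : a <> b) by (intro; subst; lra).
  destruct (H1 s1) as [u1 Hu1]; destruct (H1 s2) as [u2 Hu2].
  set (q' := fun u => if Req_dec_T u a then c u1 else if Req_dec_T u b then c u2 else q u).
  assert (Hq' : quasi_geodesic_on d lam (eps + 2 * K1) (fun u => a <= u <= b) q').
  { apply (qg_perturb _ _ _ q); auto. intros u _; unfold q'.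
    destruct (Req_dec_T u a); [subst; rewrite E1; auto|].
    destruct (Req_dec_T u b); [subst; rewrite E2; auto|]. rewrite d_refl; lra. }
  assert (Ea : q' a = c u1) by (unfold q'; destruct (Req_dec_T a a); congruence).
  assert (Eb : q' b = c u2).
  { unfold q'; destruct (Req_dec_T b a); [congruence|]. destruct (Req_dec_T b b); congruence. }
  destruct (HN lam (eps + 2 * K1) a b q' Hl ltac:(lra) Hab Hq' (ex_intro _ u1 (conj I Ea))
    (ex_intro _ u2 (conj I Eb)) t Ht) as [s [_ Hs]].
  assert (Et : q' t = q t).
  { unfold q'; destruct (Req_dec_T t a); [congruence|]. destruct (Req_dec_T t b); congruence. }
  rewrite Et in Hs. destruct (H2 s) as [t' Ht'].
  exists t'; split; [exact I|].
  pose proof (d_tri (q t) (c s) (gam t')). rewrite (d_sym (c s) (gam t')) in *. lra.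
Qed.


Lemma list_max_nat {A} (l : list (A * nat)) : exists M, forall i, In i l -> (snd i <= M)%nat.
Proof.
  induction l as [|[a m] l [M HM]].
  - exists 0%nat; intros i [].
  - exists (Nat.max m M); intros i [E|Hi].
    + subst; simpl; lia.
    + specialize (HM i Hi); lia.
Qed.

Lemma cluster (Hp : proper_space d) (u : nat -> X) x r : (forall n, d x (u n) <= r) ->
  exists y, forall e, 0 < e -> forall m, exists n, (m <= n)%nat /\ d y (u n) < e.
Proof.
  intros Hb. apply NNPP; intro Hno.
  assert (Hf : forall y, exists e m, 0 < e /\ forall n, (m <= n)%nat -> e <= d y (u n)).
  { intro y. apply NNPP; intro H1. apply Hno; exists y; intros e He m.
    apply NNPP; intro H2. apply H1; exists e, m; split; auto.
    intros n Hn. apply Rnot_lt_le; intro H3. apply H2; exists n; auto. }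
  set (U := fun (i : (X * R) * nat) z => let '(y, e, m) := i in
        0 < e /\ (forall n, (m <= n)%nat -> e <= d y (u n)) /\ d y z < e).
  destruct (Hp x r _ U) as [l Hl].
  - intros [[y e] m] z [He [Hn Hz]]. exists (e - d y z); split; [lra|].
    intros w Hw. simpl; split; [auto|split; [auto|]].
    pose proof (d_tri y z w); lra.
  - intros z _. destruct (Hf z) as [e [m [He Hn]]]. exists (z, e, m).
    simpl; split; [auto|split; [auto|]]. rewrite d_refl; auto.
  - destruct (list_max_nat l) as [M HM].
    destruct (Hl (u M) (Hb M)) as [[[y e] m] [Hin [He [Hn Hz]]]].
    specialize (HM _ Hin); simpl in HM. specialize (Hn M HM). lra.
Qed.

Definition strict (p : nat -> nat) := forall i, (p i < p (S i))%nat.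

Lemma strict_lt p : strict p -> forall i j, (i < j)%nat -> (p i < p j)%nat.
Proof.
  intros Hp i j Hij; induction Hij.
  - apply Hp.
  - specialize (Hp m); lia.
Qed.

Lemma strict_ge p : strict p -> forall i, (i <= p i)%nat.
Proof. intros Hp i; induction i; [lia|]. specialize (Hp i); lia. Qed.

Lemma inv_pos (k : nat) : 0 < / INR (S k).
Proof. apply Rinv_0_lt_compat, lt_0_INR; lia. Qed.

Lemma subseq (Hp : proper_space d) (u : nat -> X) x r : (forall n, d x (u n) <= r) ->
  exists (y : X) (phi : nat -> nat), strict phi /\ forall k, d y (u (phi k)) < / INR (S k).
Proof.
  intros Hb. destruct (cluster Hp u x r Hb) as [y Hy].
  assert (Hc : forall mk : nat * nat, exists n, (fst mk <= n)%nat /\ d y (u n) < / INR (S (snd mk))).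
  { intros [m k]; apply Hy; [apply inv_pos]. }
  destruct (choice _ Hc) as [pick Hpick].
  set (phi := nat_rect (fun _ => nat) (pick (0, 0)%nat) (fun k pk => pick (S pk, S k))).
  exists y, phi; split.
  - intro i. change (phi (S i)) with (pick (S (phi i), S i)).
    destruct (Hpick (S (phi i), S i)) as [H _]; simpl in H; lia.
  - intro k; destruct k as [|k].
    + apply (Hpick (0, 0)%nat).
    + change (phi (S k)) with (pick (S (phi k), S k)). apply (Hpick (S (phi k), S k)).
Qed.


Lemma diagonal (Hp : proper_space d) (f : nat -> Z -> X) x0 R0 :
  (forall n j, d x0 (f n j) <= R0 + Rabs (IZR j)) ->
  exists (y : Z -> X) (del : nat -> nat), (forall m, (m <= del m)%nat) /\
    forall j m, (einv j <= m)%nat -> d (y j) (f (del m) j) < / INR (S m).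
Proof.
  intros Hb.
  assert (SUB : forall pk : (nat -> nat) * nat, exists p : (nat -> nat) * X,
     strict (fst p) /\ forall i, d (snd p) (f (fst pk (fst p i)) (ez (snd pk))) < / INR (S i)).
  { intros [ps k]. destruct (subseq Hp (fun i => f (ps i) (ez k)) x0 (R0 + Rabs (IZR (ez k))))
      as [y [phi [H1 H2]]]; [intro; apply Hb|].
    exists (phi, y); split; auto. }
  destruct (choice _ SUB) as [F HF].
  set (Psi := nat_rect (fun _ => nat -> nat) (fun m => m)
                (fun k ps => fun m => ps (fst (F (ps, k)) m))).
  assert (PsiS : forall k m, Psi (S k) m = Psi k (fst (F (Psi k, k)) m)) by reflexivity.
  assert (Pstrict : forall k, strict (Psi k)).
  { induction k as [|k IH].
    - intro i; simpl; lia.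
    - intro i; rewrite !PsiS. apply strict_lt; auto. apply (proj1 (HF (Psi k, k))). }
  assert (Pfac : forall k k', (k <= k')%nat -> exists rho, strict rho /\
            forall m, Psi k' m = Psi k (rho m)).
  { intros k k' H; induction H as [|k' H [rho [Hr Hrho]]].
    - exists (fun m => m); split; [intro; lia| auto].
    - exists (fun m => rho (fst (F (Psi k', k')) m)); split.
      + intro i. apply strict_lt; auto. apply (proj1 (HF (Psi k', k'))).
      + intro m; rewrite PsiS, Hrho; reflexivity. }
  set (Y := fun k => snd (F (Psi k, k))).
  set (del := fun m => Psi (S m) m).
  assert (Key : forall k m, (k <= m)%nat -> d (Y k) (f (del m) (ez k)) < / INR (S m)).
  { intros k m Hkm. destruct (Pfac (S k) (S m) ltac:(lia)) as [rho [Hr Hrho]].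
    unfold del; rewrite Hrho, PsiS. unfold Y.
    eapply Rlt_le_trans; [apply (proj2 (HF (Psi k, k)) (rho m))|].
    apply Rinv_le_contravar; [apply lt_0_INR; lia|]. apply le_INR.
    pose proof (strict_ge rho Hr m); lia. }
  exists (fun j => Y (einv j)), del; split.
  - intro m; unfold del; apply (strict_ge _ (Pstrict (S m))).
  - intros j m Hjm. pose proof (Key (einv j) m Hjm) as K. rewrite ez_einv in K; exact K.
Qed.

Lemma assemble (Hg : geodesic_space d) (y : Z -> X) :
  (forall j k, d (y j) (y k) = Rabs (IZR j - IZR k)) ->
  exists gam, geodesic_on d line_dom gam /\ (forall j, gam (IZR j) = y j) /\
    (forall t, d (gam t) (y (fl t)) <= 1).
Proof.
  intros Hy.
  assert (H1 : forall j, d (y j) (y (j + 1)%Z) = 1).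
  { intro j; rewrite Hy, plus_IZR; rabs_all; lra. }
  assert (Hs : forall j, exists s : R -> X, geodesic_on d (fun t => 0 <= t <= 1) s /\
      s 0 = y j /\ s 1 = y (j + 1)%Z).
  { intro j; destruct (Hg (y j) (y (j + 1)%Z)) as [s Hs]. rewrite H1 in Hs. exists s; exact Hs. }
  destruct (choice _ Hs) as [S HS].
  set (gam := fun t => S (fl t) (t - IZR (fl t))).
  assert (Hfl : forall t, IZR (fl t) <= t < IZR (fl t) + 1).
  { intro t; unfold fl; rewrite minus_IZR; pose proof (archimed t); simpl; lra. }
  assert (Hseg : forall j u v, 0 <= u <= 1 -> 0 <= v <= 1 -> d (S j u) (S j v) = Rabs (u - v)).
  { intros j u v Hu Hv; apply (proj1 (HS j)); auto. }
  assert (Aux : forall s t, s <= t -> d (gam s) (gam t) = t - s).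
  { intros s t Hst. unfold gam. pose proof (Hfl s); pose proof (Hfl t).
    set (k := fl s) in *; set (m := fl t) in *.
    assert (Hkm : (k <= m)%Z).
    { assert (IZR k < IZR (m + 1)) by (rewrite plus_IZR; lra). apply lt_IZR in H2; lia. }
    destruct (Z.eq_dec k m) as [E|E].
    - rewrite <- E. rewrite Hseg by (rewrite <- E in *; lra). rabs_all; lra.
    - assert (Hk1 : (k + 1 <= m)%Z) by lia. apply IZR_le in Hk1. rewrite plus_IZR in Hk1.
      destruct (HS k) as [_ [Ek0 Ek1]]. destruct (HS m) as [_ [Em0 Em1]].
      assert (A1 : d (S k (s - IZR k)) (y (k + 1)%Z) = 1 - (s - IZR k)).
      { rewrite <- Ek1, Hseg by lra. rabs_all; lra. }
      assert (A2 : d (y m) (S m (t - IZR m)) = t - IZR m).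
      { rewrite <- Em0, Hseg by lra. rabs_all; lra. }
      assert (A3 : d (y (k + 1)%Z) (y m) = IZR m - IZR k - 1).
      { rewrite Hy, plus_IZR; rabs_all; lra. }
      assert (A4 : d (y k) (S k (s - IZR k)) = s - IZR k).
      { rewrite <- Ek0, Hseg by lra. rabs_all; lra. }
      assert (A5 : d (S m (t - IZR m)) (y (m + 1)%Z) = 1 - (t - IZR m)).
      { rewrite <- Em1, Hseg by lra. rabs_all; lra. }
      assert (A6 : d (y k) (y (m + 1)%Z) = IZR m + 1 - IZR k).
      { rewrite Hy, plus_IZR; rabs_all; lra. }
      pose proof (d_tri (S k (s - IZR k)) (y (k + 1)%Z) (S m (t - IZR m))).
      pose proof (d_tri (y (k + 1)%Z) (y m) (S m (t - IZR m))).
      pose proof (d_tri (y k) (S k (s - IZR k)) (y (m + 1)%Z)).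
      pose proof (d_tri (S k (s - IZR k)) (S m (t - IZR m)) (y (m + 1)%Z)).
      lra. }
  exists gam; split; [|split].
  - intros s t _ _. destruct (Rle_dec s t).
    + rewrite Aux by auto. rabs_all; lra.
    + rewrite d_sym, Aux by lra. rabs_all; lra.
  - intro j; unfold gam; rewrite fl_int, Rminus_diag. apply (proj1 (proj2 (HS j))).
  - intro t; unfold gam. destruct (HS (fl t)) as [_ [E0 _]]. rewrite <- E0.
    pose proof (Hfl t). rewrite Hseg by lra. rabs_all; lra.
Qed.

Lemma qg_sub lam eps (D D' : R -> Prop) q : (forall t, D' t -> D t) ->
  quasi_geodesic_on d lam eps D q -> quasi_geodesic_on d lam eps D' q.
Proof. intros HD H s t Hs Ht; apply H; auto. Qed.

Lemma construct_y (Hp : proper_space d) (Hg : geodesic_space d) c lam0 eps0 N :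
  1 <= lam0 -> 0 <= eps0 -> quasi_geodesic_on d lam0 eps0 line_dom c ->
  N_morse d N line_dom c -> morse_gauge N ->
  exists (y : Z -> X) K0 K1 K2,
    (forall j k, d (y j) (y k) = Rabs (IZR j - IZR k)) /\
    (forall j, (0 <= j)%Z -> exists s, 0 <= s /\ d (y j) (c s) <= K1) /\
    (forall j, (j <= 0)%Z -> exists s, s <= 0 /\ d (y j) (c s) <= K1) /\
    (forall s, exists j, d (y j) (c s) <= K2) /\
    d (y 0%Z) (c 0) <= K0.
Proof.
  intros Hl0 He0 Hc HN HG.
  set (N0 := N 1 0). assert (HN0 : 0 <= N0) by (apply HG; lra).
  set (D := fun n : nat => d (c (- INR n)) (c (INR n))).
  assert (HD : forall n, 0 <= D n) by (intro; apply d_nn).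
  assert (Hpex : forall n : nat, exists p : R -> X, geodesic_on d (fun t => 0 <= t <= D n) p /\
     p 0 = c (- INR n) /\ p (D n) = c (INR n)) by (intro n; apply Hg).
  destruct (choice _ Hpex) as [p Hpp].
  assert (Hgeo : forall n u v, 0 <= u <= D n -> 0 <= v <= D n -> d (p n u) (p n v) = Rabs (u - v))
    by (intros; apply (proj1 (Hpp n)); auto).
  assert (Hp0 : forall n, p n 0 = c (- INR n)) by (intro; apply Hpp).
  assert (HpD : forall n, p n (D n) = c (INR n)) by (intro; apply Hpp).
  assert (Hpq : forall n, quasi_geodesic_on d 1 0 (fun t => 0 <= t <= D n) (p n))
    by (intro; apply geo_qg; apply Hpp).
  assert (Hcov : forall n u, 0 <= u <= D n -> exists s, d (p n u) (c s) <= N0).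
  { intros n u Hu. destruct (HN 1 0 0 (D n) (p n) ltac:(lra) ltac:(lra) (HD n) (Hpq n)
      (ex_intro _ (- INR n) (conj I (Hp0 n))) (ex_intro _ (INR n) (conj I (HpD n))) u Hu)
      as [s [_ Hs]]. exists s; exact Hs. }
  set (R0 := Bf lam0 eps0 N0 1).
  assert (Hcross : forall n s0, - INR n <= s0 <= INR n ->
             exists t, 0 <= t <= D n /\ d (p n t) (c s0) <= R0).
  { intros n s0 Hs0. apply (gen_cross c lam0 eps0 (p n) 0 (D n) N0 1 s0 (- INR n) (INR n) Hl0 Hc (HD n)).
    - intros u v Hu Hv Huv; rewrite Hgeo; auto.
    - apply Hcov.
    - rewrite Hp0, d_refl; auto.
    - rewrite HpD, d_refl; auto.
    - left; auto. }
  assert (Htau : forall n, exists t, 0 <= t <= D n /\ d (p n t) (c 0) <= R0)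
    by (intro n; apply Hcross; pose proof (pos_INR n); lra).
  destruct (choice _ Htau) as [tau Htau'].
  assert (HR0 : 0 <= R0)
    by (pose proof (d_nn (p 0%nat (tau 0%nat)) (c 0)); pose proof (proj2 (Htau' 0%nat)); lra).
  set (f := fun n (j : Z) => p n (clamp (D n) (tau n + IZR j))).
  assert (Hb : forall n j, d (c 0) (f n j) <= R0 + Rabs (IZR j)).
  { intros n j. destruct (Htau' n) as [Ht Hd]. unfold f.
    pose proof (d_tri (c 0) (p n (tau n)) (p n (clamp (D n) (tau n + IZR j)))) as T1.
    rewrite (d_sym (p n (tau n)) (c 0)) in Hd. rewrite Hgeo in T1 by (auto using clamp_in).
    pose proof (clamp_lip (D n) (tau n + IZR j) (tau n) Ht) as T2.
    rewrite Rabs_minus_sym in T1.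
    replace (tau n + IZR j - tau n) with (IZR j) in T2 by ring. lra. }
  destruct (diagonal Hp f (c 0) R0 Hb) as [y [del [Hdel Hy]]].
  assert (Hgrow : forall r, exists n0, forall n, (n0 <= n)%nat -> r <= tau n /\ r <= D n - tau n).
  { intro r. destruct (INR_archimed 1 (lam0 * (r + R0 + eps0))) as [n0 Hn0]; [lra|].
    exists n0. intros n Hn. destruct (Htau' n) as [Ht Hd].
    assert (HnR : INR n0 <= INR n) by (apply le_INR; auto).
    split.
    - assert (E : d (p n 0) (p n (tau n)) = tau n) by (rewrite Hgeo by lra; rabs_all; lra).
      rewrite Hp0 in E.
      pose proof (d_tri (c (- INR n)) (p n (tau n)) (c 0)).
      pose proof (qg_lower _ _ _ _ (- INR n) 0 Hl0 Hc I I) as Lw.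
      replace (Rabs (- INR n - 0)) with (INR n) in Lw by (pose proof (pos_INR n); rabs_all; lra).
      apply Rnot_lt_le; intro Hlt.
      assert (lam0 * (d (c (- INR n)) (c 0) + eps0) <= lam0 * (r + R0 + eps0))
        by (apply Rmult_le_compat_l; lra).
      lra.
    - assert (E : d (p n (tau n)) (p n (D n)) = D n - tau n) by (rewrite Hgeo by lra; rabs_all; lra).
      rewrite HpD in E.
      pose proof (d_tri (c 0) (p n (tau n)) (c (INR n))).
      rewrite (d_sym (c 0) (p n (tau n))) in *.
      pose proof (qg_lower _ _ _ _ 0 (INR n) Hl0 Hc I I) as Lw.
      replace (Rabs (0 - INR n)) with (INR n) in Lw by (pose proof (pos_INR n); rabs_all; lra).
      apply Rnot_lt_le; intro Hlt.
      assert (lam0 * (d (c 0) (c (INR n)) + eps0) <= lam0 * (r + R0 + eps0))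
        by (apply Rmult_le_compat_l; lra).
      lra. }
  assert (Hex : forall j k, d (y j) (y k) = Rabs (IZR j - IZR k)).
  { intros j k. destruct (Hgrow (Rabs (IZR j) + Rabs (IZR k))) as [n0 Hn0].
    apply (small_eq _ _ (Nat.max n0 (Nat.max (einv j) (einv k)))). intros m Hmm.
    pose proof (Hy j m ltac:(lia)) as Yj. pose proof (Hy k m ltac:(lia)) as Yk.
    set (n := del m) in *.
    destruct (Hn0 n ltac:(unfold n; specialize (Hdel m); lia)) as [G1 G2].
    destruct (Htau' n) as [Ht _].
    pose proof (Rabs_pos (IZR j)); pose proof (Rabs_pos (IZR k)).
    assert (Ej : f n j = p n (tau n + IZR j))
      by (unfold f; rewrite clamp_id; auto; rabs_all; lra).
    assert (Ek : f n k = p n (tau n + IZR k))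
      by (unfold f; rewrite clamp_id; auto; rabs_all; lra).
    assert (E : d (f n j) (f n k) = Rabs (IZR j - IZR k)).
    { rewrite Ej, Ek, Hgeo; [f_equal; ring| |]; rabs_all; lra. }
    pose proof (d_tri (y j) (f n j) (y k)); pose proof (d_tri (f n j) (f n k) (y k)).
    pose proof (d_tri (f n j) (y j) (f n k)); pose proof (d_tri (y j) (y k) (f n k)).
    pose proof (d_sym (f n j) (y j)); pose proof (d_sym (f n k) (y k)).
    rewrite E in *. rabs_all; lra. }
  set (E1 := Ex lam0 eps0 (N 1 (0 + 2 * R0)) 1 (0 + 2 * R0)).
  set (K1 := R0 + E1 + 1).
  set (q := fun n t => if Req_dec_T t (tau n) then c 0 else p n t).
  assert (Dq : forall n t, d (p n t) (q n t) <= R0).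
  { intros n t; unfold q; destruct Req_dec_T as [e|e].
    - rewrite e; apply (proj2 (Htau' n)).
    - rewrite d_refl; lra. }
  assert (Hqq : forall n, quasi_geodesic_on d 1 (0 + 2 * R0) (fun t => 0 <= t <= D n) (q n)).
  { intro n. apply (qg_perturb _ _ _ (p n)); [apply Hpq|]. intros; apply Dq. }
  assert (Eqt : forall n, q n (tau n) = c 0)
    by (intro n; unfold q; destruct Req_dec_T; congruence).
  assert (Hpos : forall j, (0 <= j)%Z -> exists s, 0 <= s /\ d (y j) (c s) <= K1).
  { intros j Hj. apply IZR_le in Hj.
    destruct (Hgrow (IZR j)) as [n0 Hn0]. set (m := Nat.max n0 (einv j)).
    pose proof (Hy j m ltac:(unfold m; lia)) as Yj. set (n := del m) in *.
    destruct (Hn0 n ltac:(unfold n; specialize (Hdel m); unfold m in *; lia)) as [G1 G2].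
    destruct (Htau' n) as [Ht Hd].
    assert (Ef : f n j = p n (tau n + IZR j)) by (unfold f; rewrite clamp_id; [auto|lra]).
    assert (Eqb : exists s2, 0 <= s2 /\ q n (D n) = c s2).
    { unfold q; destruct Req_dec_T.
      - exists 0; split; [lra|reflexivity].
      - exists (INR n); split; [apply pos_INR| apply HpD]. }
    destruct Eqb as [s2 [Hs2 Eqb]].
    destruct (seg_ray c lam0 eps0 N 1 (0 + 2 * R0) (tau n) (D n) (q n) 0 0 s2 (tau n + IZR j))
      as [s [Hs Ds]]; auto; try lra.
    { apply (qg_sub _ _ (fun t => 0 <= t <= D n)); [intros; lra| apply Hqq]. }
    exists s; split; auto. fold E1 in Ds.
    pose proof (Dq n (tau n + IZR j)).
    pose proof (d_tri (y j) (f n j) (c s)). pose proof (d_tri (f n j) (q n (tau n + IZR j)) (c s)).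
    pose proof (inv_le1 m). rewrite Ef in *. unfold K1; lra. }
  assert (Hneg : forall j, (j <= 0)%Z -> exists s, s <= 0 /\ d (y j) (c s) <= K1).
  { intros j Hj. apply IZR_le in Hj.
    destruct (Hgrow (- IZR j)) as [n0 Hn0]. set (m := Nat.max n0 (einv j)).
    pose proof (Hy j m ltac:(unfold m; lia)) as Yj. set (n := del m) in *.
    destruct (Hn0 n ltac:(unfold n; specialize (Hdel m); unfold m in *; lia)) as [G1 G2].
    destruct (Htau' n) as [Ht Hd].
    assert (Ef : f n j = p n (tau n + IZR j)) by (unfold f; rewrite clamp_id; [auto|lra]).
    assert (Eqa : exists s1, s1 <= 0 /\ q n 0 = c s1).
    { unfold q; destruct Req_dec_T.
      - exists 0; split; [lra|reflexivity].
      - exists (- INR n); split; [pose proof (pos_INR n); lra| apply Hp0]. }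
    destruct Eqa as [s1 [Hs1 Eqa]].
    destruct (seg_ray_le c lam0 eps0 N 1 (0 + 2 * R0) 0 (tau n) (q n) 0 s1 0 (tau n + IZR j))
      as [s [Hs Ds]]; auto; try lra.
    { apply (qg_sub _ _ (fun t => 0 <= t <= D n)); [intros; lra| apply Hqq]. }
    exists s; split; auto. fold E1 in Ds.
    pose proof (Dq n (tau n + IZR j)).
    pose proof (d_tri (y j) (f n j) (c s)). pose proof (d_tri (f n j) (q n (tau n + IZR j)) (c s)).
    pose proof (inv_le1 m). rewrite Ef in *. unfold K1; lra. }
  assert (Hall : forall s0, exists j, d (y j) (c s0) <= R0 + 2).
  { intros s0. set (S0 := 2 * R0 + d (c s0) (c 0)).
    destruct (INR_archimed 1 (Rabs s0)) as [n1 Hn1]; [lra|].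
    set (MS := (2 * Z.to_nat (up (S0 + 1)))%nat).
    set (m := Nat.max n1 MS). set (n := del m).
    assert (Hnn : INR n1 <= INR n) by (apply le_INR; unfold n; specialize (Hdel m); unfold m in *; lia).
    destruct (Hcross n s0) as [t [Ht Dt]]; [rabs_all; lra|].
    destruct (Htau' n) as [Htn Hdn].
    assert (Hts : Rabs (t - tau n) <= S0).
    { rewrite <- (Hgeo n t (tau n)) by auto.
      pose proof (d_tri (p n t) (c s0) (p n (tau n))). pose proof (d_tri (c s0) (c 0) (p n (tau n))).
      rewrite (d_sym (c 0) (p n (tau n))) in *. unfold S0; lra. }
    set (j := fl (t - tau n)).
    pose proof (fl_spec (t - tau n)) as Hfl. fold j in Hfl.
    assert (Hj : (einv j <= m)%nat).
    { pose proof (einv_bound j).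
      assert (Z.abs j < up (S0 + 1))%Z.
      { apply lt_IZR; rewrite abs_IZR; pose proof (archimed (S0 + 1)); rabs_all; lra. }
      unfold m, MS; lia. }
    pose proof (Hy j m Hj) as Yj. fold n in Yj.
    assert (Df : d (f n j) (p n t) <= 1).
    { unfold f; rewrite Hgeo by (auto using clamp_in).
      pose proof (clamp_lip (D n) (tau n + IZR j) t Ht). rabs_all; lra. }
    exists j. pose proof (d_tri (y j) (f n j) (c s0)). pose proof (d_tri (f n j) (p n t) (c s0)).
    pose proof (inv_le1 m). lra. }
  assert (H0 : d (y 0%Z) (c 0) <= R0 + 1).
  { pose proof (Hy 0%Z 0%nat ltac:(reflexivity)) as Y0. set (n := del 0%nat) in *.
    destruct (Htau' n) as [Ht Hd].
    assert (Ef : f n 0%Z = p n (tau n)).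
    { unfold f. change (IZR 0) with 0. rewrite Rplus_0_r, clamp_id; auto. }
    rewrite Ef in Y0. pose proof (d_tri (y 0%Z) (p n (tau n)) (c 0)).
    pose proof (inv_le1 0). lra. }
  exists y, (R0 + 1), K1, (R0 + 2). repeat split; auto.
Qed.

Lemma FH_sym D1 (c1 : R -> X) D2 c2 : finite_hausdorff d D1 c1 D2 c2 -> finite_hausdorff d D2 c2 D1 c1.
Proof.
  intros [K [H1 H2]]; exists K; split.
  - intros s Hs; destruct (H2 s Hs) as [t [Ht Hd]]; exists t; split; auto; rewrite d_sym; auto.
  - intros t Ht; destruct (H1 t Ht) as [s [Hs Hd]]; exists s; split; auto; rewrite d_sym; auto.
Qed.

Lemma FH_trans D1 (c1 : R -> X) D2 c2 D3 c3 : finite_hausdorff d D1 c1 D2 c2 ->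
  finite_hausdorff d D2 c2 D3 c3 -> finite_hausdorff d D1 c1 D3 c3.
Proof.
  intros [K1 [A1 B1]] [K2 [A2 B2]]; exists (K1 + K2); split.
  - intros s Hs; destruct (A1 s Hs) as [t [Ht Hd]]; destruct (A2 t Ht) as [u [Hu Hd']].
    exists u; split; auto. pose proof (d_tri (c1 s) (c2 t) (c3 u)); lra.
  - intros u Hu; destruct (B2 u Hu) as [t [Ht Hd]]; destruct (B1 t Ht) as [s [Hs Hd']].
    exists s; split; auto. pose proof (d_tri (c1 s) (c2 t) (c3 u)); lra.
Qed.

Lemma FH_iso (g : X -> X) D1 (c1 : R -> X) D2 c2 : (forall x y, d (g x) (g y) = d x y) ->
  finite_hausdorff d D1 c1 D2 c2 ->
  finite_hausdorff d D1 (fun t => g (c1 t)) D2 (fun t => g (c2 t)).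
Proof.
  intros Hg [K [H1 H2]]; exists K; split.
  - intros s Hs; destruct (H1 s Hs) as [t [Ht Hd]]; exists t; split; auto; rewrite Hg; auto.
  - intros t Ht; destruct (H2 t Ht) as [s [Hs Hd]]; exists s; split; auto; rewrite Hg; auto.
Qed.

Lemma construct (Hp : proper_space d) (Hg : geodesic_space d) c lam0 eps0 N :
  1 <= lam0 -> 0 <= eps0 -> quasi_geodesic_on d lam0 eps0 line_dom c ->
  N_morse d N line_dom c -> morse_gauge N ->
  exists gam, geodesic_on d line_dom gam /\
    finite_hausdorff d ray_dom (pos_end gam) ray_dom c /\
    finite_hausdorff d ray_dom (neg_end gam) ray_dom (neg_end c).
Proof.
  intros Hl0 He0 Hc HN HG.
  destruct (construct_y Hp Hg c lam0 eps0 N Hl0 He0 Hc HN HG)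
    as [y [K0 [K1 [K2 [Hex [Hpos [Hneg [Hall H0]]]]]]]].
  destruct (assemble Hg y Hex) as [gam [Hgeo [Hint Hnear]]].
  assert (HK1 : 0 <= K1).
  { destruct (Hpos 0%Z ltac:(lia)) as [s [_ Hs]]. pose proof (d_nn (y 0%Z) (c s)); lra. }
  assert (Hcp : forall j s s0, d (y j) (c s0) <= K2 -> d (y j) (c s) <= K1 ->
            (s0 <= 0 <= s \/ s <= 0 <= s0) -> d (gam 0) (c s0) <= Bf lam0 eps0 K1 K2 + K0).
  { intros j s s0 H2 H1 Hb.
    assert (A : d (c s0) (c 0) <= Bf lam0 eps0 K1 K2).
    { apply (close_pair c lam0 eps0 K1 K2 0 (c s0) (y j) s0 s); auto.
      - rewrite d_refl; auto.
      - rewrite d_sym; auto. }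
    assert (E0 : gam 0 = y 0%Z) by (rewrite <- (Hint 0%Z); reflexivity).
    rewrite E0. pose proof (d_tri (y 0%Z) (c 0) (c s0)). rewrite (d_sym (c 0) (c s0)) in *. lra. }
  set (K := Rmax (K1 + 1) (Rmax K2 (Bf lam0 eps0 K1 K2 + K0))).
  assert (KA : K1 + 1 <= K) by apply Rmax_l.
  assert (KB : K2 <= K) by (eapply Rle_trans; [apply Rmax_l| apply Rmax_r]).
  assert (KC : Bf lam0 eps0 K1 K2 + K0 <= K) by (eapply Rle_trans; [apply Rmax_r| apply Rmax_r]).
  exists gam; split; [exact Hgeo|split].
  - exists K; split.
    + intros t Ht. unfold ray_dom in Ht. pose proof (fl_spec t) as Hf.
      assert (Hz : (0 <= fl t)%Z).
      { assert (-1 < fl t)%Z by (apply lt_IZR; lra). lia. }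
      destruct (Hpos _ Hz) as [s [Hs Ds]]. exists s; split; [exact Hs|].
      unfold pos_end. pose proof (Hnear t). pose proof (d_tri (gam t) (y (fl t)) (c s)). lra.
    + intros s0 Hs0. unfold ray_dom in Hs0. destruct (Hall s0) as [j Hj].
      destruct (Z_le_gt_dec 0 j) as [Hz|Hz].
      * exists (IZR j); split; [apply IZR_le in Hz; exact Hz|]. unfold pos_end; rewrite Hint; lra.
      * destruct (Hneg j ltac:(lia)) as [s [Hs Ds]].
        exists 0; split; [unfold ray_dom; lra|]. unfold pos_end.
        pose proof (Hcp j s s0 Hj Ds ltac:(lra)); lra.
  - exists K; split.
    + intros t Ht. unfold ray_dom in Ht. pose proof (fl_spec (- t)) as Hf.
      assert (Hz : (fl (- t) <= 0)%Z) by (apply le_IZR; lra).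
      destruct (Hneg _ Hz) as [s [Hs Ds]]. exists (- s); split; [unfold ray_dom; lra|].
      unfold neg_end. rewrite Ropp_involutive.
      pose proof (Hnear (- t)). pose proof (d_tri (gam (- t)) (y (fl (- t))) (c s)). lra.
    + intros s0 Hs0. unfold ray_dom in Hs0. destruct (Hall (- s0)) as [j Hj].
      destruct (Z_le_gt_dec j 0) as [Hz|Hz].
      * exists (- IZR j); split; [apply IZR_le in Hz; unfold ray_dom; lra|].
        unfold neg_end; rewrite Ropp_involutive, Hint; lra.
      * destruct (Hpos j ltac:(lia)) as [s [Hs Ds]].
        exists 0; split; [unfold ray_dom; lra|]. unfold neg_end. rewrite Ropp_0.
        pose proof (Hcp j s (- s0) Hj Ds ltac:(lra)); lra.
Qed.
End Gen.

Theorem lemma4p5 (X : Type) (d : X -> X -> R)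
  (Hmetric : is_metric d) (Hproper : proper_space d)
  (Hgeod : geodesic_space d) (x0 : X) (g : X -> X)
  (Hg : morse_isometry d g x0) :
  exists gamma : R -> X,
    geodesic_on d line_dom gamma /\ is_morse d line_dom gamma /\
    morse_geodesic_ray d (pos_end gamma) /\
    morse_geodesic_ray d (neg_end gamma) /\
    ~ same_boundary_point d (pos_end gamma) (neg_end gamma) /\
    same_boundary_point d (fun t => g (pos_end gamma t)) (pos_end gamma) /\
    same_boundary_point d (fun t => g (neg_end gamma t)) (neg_end gamma).
Proof.
  destruct Hg as [[Hiso _] [x [Hx0 [Hxs HL]]]].
  cbv zeta in HL. set (L := d x0 (g x0)) in *.
  destruct HL as [HL0 [N [HG [c [Hseg [[lam0 [eps0 [Hl0 [He0 Hc]]]] HNc]]]]]].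
  destruct (construct X d Hmetric Hproper Hgeod c lam0 eps0 N Hl0 He0 Hc HNc HG)
    as [gam [Hgeo [FHp FHn]]].
  pose proof (d_tri X d Hmetric) as Tri. pose proof (d_sym X d Hmetric) as Sym.
  pose proof (d_nn X d Hmetric) as Nn. pose proof (d_refl X d Hmetric) as Refl.
  destruct FHp as [Kp [Ap Bp]]. destruct FHn as [Kn [An Bn]].
  set (Kl := Rmax Kp Kn).
  assert (Kpl : Kp <= Kl) by apply Rmax_l. assert (Knl : Kn <= Kl) by apply Rmax_r.
  assert (Hin1 : forall t, exists s, d (gam t) (c s) <= Kl).
  { intro t. destruct (Rle_dec 0 t) as [Ht|Ht].
    - destruct (Ap t Ht) as [s [_ Hs]]; exists s; unfold pos_end in Hs; lra.
    - destruct (An (- t) ltac:(unfold ray_dom; lra)) as [s [_ Hs]]. exists (- s).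
      unfold neg_end in Hs; rewrite Ropp_involutive in Hs; lra. }
  assert (Hin2 : forall s, exists t, d (gam t) (c s) <= Kl).
  { intro s. destruct (Rle_dec 0 s) as [Hs|Hs].
    - destruct (Bp s Hs) as [t [_ Ht]]; exists t; unfold pos_end in Ht; lra.
    - destruct (Bn (- s) ltac:(unfold ray_dom; lra)) as [t [_ Ht]]. exists (- t).
      unfold neg_end in Ht; rewrite Ropp_involutive in Ht; lra. }
  assert (HKl : 0 <= Kl) by (destruct (Hin1 0) as [s Hs]; pose proof (Nn (gam 0) (c s)); lra).
  pose proof (morse_transfer X d Hmetric gam c N Kl Kl HNc HG HKl Hin1 Hin2) as HN'.
  set (N' := fun lam eps => N lam (eps + 2 * Kl) + Kl) in HN'.
  assert (HG' : morse_gauge N').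
  { intros lam eps Hl He; unfold N'. pose proof (HG lam (eps + 2 * Kl) Hl ltac:(lra)); lra. }
  assert (Hgeo' : geodesic_on d line_dom (fun s => gam (- s))).
  { intros s t _ _. rewrite Hgeo by exact I.
    replace (- s - - t) with (- (s - t)) by ring. apply Rabs_Ropp. }
  assert (Hshift : forall s, d (g (c s)) (c (s + L)) <= 2 * L).
  { intro s. set (i := fl (s / L)). pose proof (fl_spec (s / L)) as Hf. fold i in Hf.
    assert (A1 : IZR i * L <= s).
    { destruct Hf as [Hf _]. apply (Rmult_le_compat_r L) in Hf; [|lra].
      replace (s / L * L) with s in Hf by (field; lra). exact Hf. }
    assert (A2 : s < IZR i * L + L).
    { destruct Hf as [_ Hf]. apply (Rmult_lt_compat_r L) in Hf; [|lra].
      replace (s / L * L) with s in Hf by (field; lra). lra. }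
    set (u := s - IZR i * L).
    destruct (Hseg i) as [G1 [E1 E2]]. destruct (Hseg (i + 1)%Z) as [G3 [E3 E4]].
    assert (D1 : d (c s) (x i) = u).
    { rewrite <- E1. pose proof (G1 u 0 ltac:(unfold u; lra) ltac:(lra)) as G. cbv beta in G.
      replace (IZR i * L + u) with s in G by (unfold u; ring).
      rewrite Rplus_0_r in G. rewrite G. unfold u; rabs_all; lra. }
    assert (D2 : d (x (i + 1)%Z) (c (s + L)) = u).
    { rewrite <- E3. pose proof (G3 0 u ltac:(lra) ltac:(unfold u; lra)) as G. cbv beta in G.
      replace (IZR (i + 1) * L + u) with (s + L) in G by (unfold u; rewrite plus_IZR; ring).
      rewrite Rplus_0_r in G. rewrite G. unfold u; rabs_all; lra. }
    rewrite <- (Hiso (c s) (x i)) in D1. rewrite <- Hxs in D1.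
    pose proof (Tri (g (c s)) (x (i + 1)%Z) (c (s + L))). unfold u in *; lra. }
  set (KL := 2 * L + (lam0 * L + eps0)).
  assert (HlL : 0 <= lam0 * L) by (apply Rmult_le_pos; lra).
  assert (HcL : forall s, 0 <= s <= L -> d (c s) (c L) <= lam0 * L + eps0).
  { intros s Hs. pose proof (qg_upper X d _ _ _ _ s L Hc I I).
    assert (lam0 * Rabs (s - L) <= lam0 * L) by (apply Rmult_le_compat_l; [lra| rabs_all; lra]).
    lra. }
  assert (FHc : finite_hausdorff d ray_dom (fun t => g (c t)) ray_dom c).
  { exists KL; split.
    - intros s Hs. exists (s + L); split; [unfold ray_dom in *; lra|].
      pose proof (Hshift s); unfold KL; pose proof (Nn (c 0) (c 0)); lra.
    - intros t Ht. unfold ray_dom in Ht. destruct (Rle_dec L t) as [HLt|HLt].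
      + exists (t - L); split; [unfold ray_dom; lra|].
        pose proof (Hshift (t - L)). replace (t - L + L) with t in H by ring.
        unfold KL; lra.
      + exists 0; split; [unfold ray_dom; lra|].
        pose proof (Hshift 0). rewrite Rplus_0_l in H.
        pose proof (HcL t ltac:(lra)). rewrite Sym in H0.
        pose proof (Tri (g (c 0)) (c L) (c t)). unfold KL; lra. }
  assert (FHcn : finite_hausdorff d ray_dom (fun t => g (neg_end c t)) ray_dom (neg_end c)).
  { exists KL; unfold neg_end; split.
    - intros s Hs. unfold ray_dom in Hs. destruct (Rle_dec L s) as [HLs|HLs].
      + exists (s - L); split; [unfold ray_dom; lra|].
        pose proof (Hshift (- s)). replace (- s + L) with (- (s - L)) in H by ring.
        unfold KL; lra.
      + exists 0; split; [unfold ray_dom; lra|]. rewrite Ropp_0.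
        pose proof (Hshift (- s)). pose proof (HcL (- s + L) ltac:(lra)).
        pose proof (HcL 0 ltac:(lra)).
        pose proof (Tri (g (c (- s))) (c (- s + L)) (c L)).
        pose proof (Tri (g (c (- s))) (c L) (c 0)). rewrite (Sym (c L) (c 0)) in *.
        unfold KL.
        assert (Rabs (- s + L) <= L) by (rabs_all; lra).
        pose proof (qg_upper X d _ _ _ _ (- s + L) 0 Hc I I).
        assert (lam0 * Rabs (- s + L - 0) <= lam0 * L)
          by (apply Rmult_le_compat_l; [lra| rabs_all; lra]).
        pose proof (Tri (g (c (- s))) (c (- s + L)) (c 0)). lra.
    - intros t Ht. unfold ray_dom in Ht. exists (t + L); split; [unfold ray_dom; lra|].
      pose proof (Hshift (- (t + L))). replace (- (t + L) + L) with (- t) in H by ring.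
      unfold KL; pose proof (Nn (c 0) (c 0)); lra. }
  assert (FHp : finite_hausdorff d ray_dom (pos_end gam) ray_dom c) by (exists Kp; auto).
  assert (FHn : finite_hausdorff d ray_dom (neg_end gam) ray_dom (neg_end c)) by (exists Kn; auto).
  exists gam; split; [exact Hgeo|]; split; [exists N'; auto|]; split; [|split; [|split; [|split]]].
  - split; [intros s t _ _; apply Hgeo; exact I|].
    exact (ray_morse X d Hmetric gam N' Hgeo HN' HG').
  - split; [intros s t _ _; apply Hgeo'; exact I|].
    exact (ray_morse X d Hmetric (fun s => gam (- s)) N' Hgeo'
             (morse_rev X d N' gam HN') HG').
  - intros [K [H1 _]]. destruct (H1 (Rabs K + 1) ltac:(unfold ray_dom; pose proof (Rabs_pos K); lra))
      as [t [Ht Hd]]. unfold ray_dom in Ht. unfold pos_end, neg_end in Hd.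
    rewrite Hgeo in Hd by exact I. pose proof (Rabs_pos K).
    assert (K <= Rabs K) by apply RRle_abs. rabs_all; lra.
  - unfold same_boundary_point.
    eapply (FH_trans X d Hmetric); [apply (FH_iso X d g _ _ _ _ Hiso FHp)|].
    eapply (FH_trans X d Hmetric); [exact FHc|]. apply (FH_sym X d Hmetric); exact FHp.
  - unfold same_boundary_point.
    eapply (FH_trans X d Hmetric); [apply (FH_iso X d g _ _ _ _ Hiso FHn)|].
    eapply (FH_trans X d Hmetric); [exact FHcn|]. apply (FH_sym X d Hmetric); exact FHn.
Qed.
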